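(* Let $\mathcal{F}\subseteq 2^{[n]}$ be an s-extremal family. Then there is a unique Sperner family $\mathcal{S}\subseteq 2^{[n]}$ and a unique function $h:\mathcal{S}\to 2^{[n]}$ with $h(S)\subseteq S$ for every $S\in\mathcal{S}$ such that $\mathcal{F}=\mathcal{F}(\mathcal{S},h)$ and $\mathrm{Sh}(\mathcal{F})=\mathcal{H}(\mathcal{S})$.
   Context: $[n]=\{1,\dots,n\}$. A Sperner family is a family of sets none of which is contained in another. $\mathcal{F}$ shatters $S$ if $\{F\cap S:F\in\mathcal{F}\}=2^S$; $\mathrm{Sh}(\mathcal{F})$ is the family of shattered sets; $\mathcal{F}$ is s-extremal if $|\mathrm{Sh}(\mathcal{F})|=|\mathcal{F}|$. For $H\subseteq S\subseteq[n]$, $\mathcal{Q}_{S,H}=\{H\cup B: B\subseteq[n]\setminus S\}$. $\mathcal{H}(\mathcal{S})=\{F\subseteq[n]: \text{no } S\in\mathcal{S} \text{ satisfies } S\subseteq F\}$, and $\mathcal{F}(\mathcal{S},h)=2^{[n]}\setminus\bigcup_{S\in\mathcal{S}}\mathcal{Q}_{S,h(S)}$. *)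

(* Defs.v *)
From mathcomp Require Import all_boot.
Set Implicit Arguments. Unset Strict Implicit. Unset Printing Implicit Defensive.

Section Defs.
Variable n : nat.
Local Notation T := {set 'I_n}.

Definition sperner (S : {set T}) : Prop :=
  forall A B, A \in S -> B \in S -> A \subset B -> A = B.

Definition shatters (F : {set T}) (X : T) : bool :=
  [set F0 :&: X | F0 in F] == powerset X.

Definition Sh (F : {set T}) : {set T} := [set X | shatters F X].

Definition s_extremal (F : {set T}) : Prop := #|Sh F| = #|F|.

Definition Q (S H : T) : {set T} := [set H :|: B | B in powerset (~: S)].

Definition HS (SS : {set T}) : {set T} :=
  [set F : T | [forall S in SS, ~~ (S \subset F)]].

Definition FSh (SS : {set T}) (h : T -> T) : {set T} :=
  ~: \bigcup_(S in SS) Q S (h S).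
End Defs.

(* Main.v *)
Require Import Defs.
From mathcomp Require Import all_boot zify.
Set Implicit Arguments. Unset Strict Implicit. Unset Printing Implicit Defensive.

Ltac bsolve := intros; repeat match goal with
  | H : true -> false |- _ => by move: (H isT)
  | H : is_true true -> is_true false |- _ => by move: (H isT)
  end.

Lemma shattersP n (F : {set {set 'I_n}}) (X : {set 'I_n}) :
  reflect (forall Y : {set 'I_n}, Y \subset X -> exists2 A, A \in F & A :&: X = Y) (shatters F X).
Proof.
rewrite /shatters eqEsubset.
have -> : [set F0 :&: X | F0 in F] \subset powerset X.
  by apply/subsetP => Y /imsetP [A _ ->]; rewrite powersetE subsetIr.
apply: (iffP idP) => [H Y YX | H].
  have : Y \in powerset X by rewrite powersetE.
  by move/(subsetP H) => /imsetP [A AF ->]; exists A.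
by apply/subsetP => Y; rewrite powersetE => /H [A AF <-]; apply: imset_f.
Qed.

Lemma Sh_down n (F : {set {set 'I_n}}) (X Y : {set 'I_n}) : X \in Sh F -> Y \subset X -> Y \in Sh F.
Proof.
rewrite !inE => /shattersP H YX; apply/shattersP => Z ZY.
have [A AF /setP E] := H Z (subset_trans ZY YX).
exists A => //; apply/setP => x; move: (E x) (subsetP ZY x) (subsetP YX x); rewrite !inE.
by case: (x \in A); case: (x \in X); case: (x \in Y); case: (x \in Z) => //=; bsolve.
Qed.

Lemma Sh_cover n (F : {set {set 'I_n}}) (X : {set 'I_n}) : X \in Sh F -> X \subset cover F.
Proof.
rewrite inE => /shattersP /(_ X (subxx X)) [A AF E].
by apply: subset_trans (bigcup_sup A AF); rewrite -{1}E subsetIl.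
Qed.

Definition proj n (i : 'I_n) (F : {set {set 'I_n}}) := [set A :\ i | A in F].
Definition both n (i : 'I_n) (F : {set {set 'I_n}}) :=
  [set A in F | (i \notin A) && (i |: A \in F)].

Lemma setD1_notin n (i : 'I_n) (A : {set 'I_n}) : i \notin A -> A :\ i = A.
Proof.
move=> iA; apply/setP => x; rewrite !inE.
by case: (eqVneq x i) => [->|] //=; rewrite (negbTE iA).
Qed.

Lemma card_proj_both n (i : 'I_n) (F : {set {set 'I_n}}) : #|F| = #|proj i F| + #|both i F|.
Proof.
set F1 := [set A in F | i \in A]. set F0 := [set A in F | i \notin A].
have eF : F = F0 :|: F1.
  by apply/setP => A; rewrite !inE; case: (A \in F); case: (i \in A).
have dF : F0 :&: F1 = set0.
  by apply/setP => A; rewrite !inE; case: (A \in F); case: (i \in A).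
have inj : {in F1 &, injective (fun A => A :\ i)}.
  move=> A B; rewrite !inE => /andP[_ iA] /andP[_ iB] E.
  by rewrite -(setD1K iA) -(setD1K iB) /= E.
have ep : proj i F = F0 :|: [set A :\ i | A in F1].
  apply/setP => B; apply/imsetP/setUP => [[A AF ->]|[]].
  - case iA: (i \in A).
      by right; apply: imset_f; rewrite inE AF iA.
    by left; rewrite setD1_notin ?iA // inE AF iA.
  - rewrite inE => /andP [BF iB]; exists B => //; by rewrite setD1_notin.
  - by case/imsetP => A; rewrite inE => /andP [AF _] ->; exists A.
have eb : both i F = F0 :&: [set A :\ i | A in F1].
  apply/setP => B; rewrite !inE; apply/idP/idP.
    case/and3P => BF iB iBF; rewrite BF iB /=; apply/imsetP; exists (i |: B).
      by rewrite inE iBF setU11.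
    by rewrite setU1K.
  case/andP => /andP [BF iB] /imsetP [A]; rewrite inE => /andP [AF iA] eB.
  by rewrite BF iB eB setD1K.
have h1 := cardsUI F0 F1; rewrite -eF dF cards0 addn0 in h1.
have h2 := cardsUI F0 [set A :\ i | A in F1]; rewrite -ep -eb (card_in_imset inj) in h2.
by rewrite h1 h2.
Qed.

Lemma proj_cover n (i : 'I_n) (F : {set {set 'I_n}}) : i \notin cover (proj i F).
Proof.
apply/bigcupP => [[B /imsetP [A _ ->]]]; by rewrite !inE eqxx.
Qed.

Lemma both_sub n (i : 'I_n) (F : {set {set 'I_n}}) : both i F \subset proj i F.
Proof.
apply/subsetP => B; rewrite inE => /and3P [BF iB _]; apply/imsetP; exists B => //.
by rewrite setD1_notin.
Qed.

Lemma cover_mono n (F G : {set {set 'I_n}}) : F \subset G -> cover F \subset cover G.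
Proof.
move=> FG; apply/subsetP => x /bigcupP [B BF xB]; apply/bigcupP; exists B => //.
exact: (subsetP FG).
Qed.

Lemma Sh_proj_both n (i : 'I_n) (F : {set {set 'I_n}}) : #|Sh (proj i F)| + #|Sh (both i F)| <= #|Sh F|.
Proof.
have c1 X : X \in Sh (proj i F) -> i \notin X.
  by move/Sh_cover/subsetP => S; apply/negP => /S; apply/negP; apply: proj_cover.
have c2 X : X \in Sh (both i F) -> i \notin X.
  move/Sh_cover/subsetP => S; apply/negP => /S; apply/negP.
  by apply: contra (proj_cover i F); apply: (subsetP (cover_mono (both_sub i F))).
have s1 : Sh (proj i F) \subset Sh F.
  apply/subsetP => X XS; have iX := c1 X XS.
  move: XS; rewrite !inE => /shattersP H; apply/shattersP => Y YX.
  have [B /imsetP [A AF ->] E] := H Y YX.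
  exists A => //; rewrite -E; apply/setP => x; rewrite !inE.
  by case: (eqVneq x i) => [->|] //=; rewrite (negbTE iX) andbF.
have s2 : [set i |: X | X in Sh (both i F)] \subset Sh F.
  apply/subsetP => _ /imsetP [X XS ->]; have iX := c2 X XS.
  move: XS; rewrite !inE => /shattersP H; apply/shattersP => Y YX.
  have [|A] := H (Y :\ i).
    apply/subsetP => x; rewrite !inE => /andP [xi xY].
    by move: (subsetP YX x xY); rewrite !inE (negbTE xi).
  rewrite inE => /and3P [AF iA iAF] /setP E.
  case iY: (i \in Y).
    exists (i |: A) => //; apply/setP => x; move: (E x); rewrite !inE.
    by case: (eqVneq x i) => [->|] //= _; rewrite iY.
  exists A => //; apply/setP => x; move: (E x); rewrite !inE.
  by case: (eqVneq x i) => [->|] //= _; rewrite iY (negbTE iA).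
have disj : Sh (proj i F) :&: [set i |: X | X in Sh (both i F)] = set0.
  apply/setP => X; rewrite in_setI in_set0; apply/andP => [[XS /imsetP [Z _ eX]]].
  by move: (c1 X XS); rewrite eX setU11.
have inj : {in Sh (both i F) &, injective (fun X => i |: X)}.
  by move=> X Y XS YS /= E; rewrite -(setU1K (c2 X XS)) -(setU1K (c2 Y YS)) E.
have := cardsUI (Sh (proj i F)) [set i |: X | X in Sh (both i F)].
rewrite disj cards0 addn0 (card_in_imset inj) => <-.
by apply: subset_leq_card; rewrite subUset s1 s2.
Qed.

Lemma pajor n (F : {set {set 'I_n}}) : #|F| <= #|Sh F|.
Proof.
move: {2}#|cover F|.+1 (ltnSn #|cover F|) => k; elim: k F => [|k IH] F // ltk.
case: (set_0Vmem (cover F)) => [c0 | [i ic]].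
  have sub : F \subset [set set0].
    apply/subsetP => A AF; rewrite inE -subset0 -c0; exact: bigcup_sup.
  case: (set_0Vmem F) => [->| [A AF]]; first by rewrite cards0.
  have s0 : set0 \in Sh F.
    rewrite inE; apply/shattersP => Y; rewrite subset0 => /eqP ->.
    by exists A => //; rewrite setI0.
  apply: leq_trans (subset_leq_card sub) _; rewrite cards1 card_gt0.
  by apply/set0Pn; exists set0.
have cp : cover (proj i F) \proper cover F.
  apply: sub_proper_trans (properD1 ic).
  apply/subsetP => x /bigcupP [B /imsetP [A AF ->]]; rewrite !inE => /andP [xi xA].
  by rewrite xi /=; apply/bigcupP; exists A.
have cb : cover (both i F) \proper cover F.
  exact: sub_proper_trans (cover_mono (both_sub i F)) cp.
have l1 := proper_card cp; have l2 := proper_card cb.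
rewrite (card_proj_both i); apply: leq_trans (Sh_proj_both i F).
by apply: leq_add; apply: IH; [apply: leq_trans l1 _ | apply: leq_trans l2 _]; rewrite -ltnS.
Qed.

Lemma proj_extremal n (i : 'I_n) (F : {set {set 'I_n}}) :
  s_extremal F -> s_extremal (proj i F).
Proof.
rewrite /s_extremal => E.
have := card_proj_both i F; have := Sh_proj_both i F.
have := pajor (proj i F); have := pajor (both i F).
rewrite E => a b c d; apply/eqP; rewrite eqn_leq b andbT -(leq_add2r #|Sh (both i F)|).
apply: leq_trans c _; by rewrite d leq_add2l.
Qed.

Lemma diff_extremal n (F : {set {set 'I_n}}) (s : seq 'I_n) :
  s_extremal F -> s_extremal [set A :\: [set x in s] | A in F].
Proof.
move=> ext; elim: s => [|i s IH].
  have -> : [set A :\: [set x in [::]] | A in F] = F; last by [].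
  have e A : A :\: [set x in [::]] = A by apply/setP => x; rewrite !inE.
  by apply/setP => B; apply/imsetP/idP => [[A AF ->]|BF]; [rewrite e | exists B; rewrite ?e].
have -> : [set A :\: [set x in i :: s] | A in F] = proj i [set A :\: [set x in s] | A in F].
  rewrite /proj -imset_comp; apply: eq_imset => A /=; apply/setP => x.
  by rewrite !inE negb_or andbA.
exact: proj_extremal.
Qed.

Lemma trace_extremal n (F : {set {set 'I_n}}) (S : {set 'I_n}) :
  s_extremal F -> s_extremal [set A :&: S | A in F].
Proof.
move=> /(diff_extremal (enum (~: S))).
have -> // : [set A :\: [set x in enum (~: S)] | A in F] = [set A :&: S | A in F].
apply: eq_imset => A; apply/setP => x; rewrite !inE mem_enum !inE negbK.
by rewrite andbC.
Qed.

Lemma Sh_trace n (F : {set {set 'I_n}}) (S X : {set 'I_n}) :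
  (X \in Sh [set A :&: S | A in F]) = (X \subset S) && (X \in Sh F).
Proof.
apply/idP/andP => [XS | [XS]].
  have sub : X \subset S.
    apply: subset_trans (Sh_cover XS) _; apply/subsetP => x /bigcupP [B /imsetP [A _ ->]].
    by rewrite inE => /andP [].
  split => //; move: XS; rewrite !inE => /shattersP H; apply/shattersP => Y YX.
  have [_ /imsetP [A AF ->] E] := H Y YX; exists A => //; rewrite -E.
  apply/setP => x; rewrite !inE; move: (subsetP sub x).
  by case: (x \in A); case: (x \in X); case: (x \in S) => //=; bsolve.
rewrite !inE => /shattersP H; apply/shattersP => Y YX.
have [A AF E] := H Y YX; exists (A :&: S); first by apply: imset_f.
rewrite -E; apply/setP => x; rewrite !inE; move: (subsetP XS x).
by case: (x \in A); case: (x \in X); case: (x \in S) => //=; bsolve.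
Qed.

Lemma inQ n (S H A : {set 'I_n}) : H \subset S -> (A \in Q S H) = (A :&: S == H).
Proof.
move=> HS; apply/imsetP/eqP => [[B]|E].
  rewrite powersetE => BS ->; apply/setP => x; rewrite !inE.
  move: (subsetP BS x) (subsetP HS x); rewrite !inE.
  by case: (x \in B); case: (x \in S); case: (x \in H) => //=; bsolve.
exists (A :\: S).
  by rewrite powersetE; apply/subsetP => x; rewrite !inE => /andP [].
rewrite -E; apply/setP => x; rewrite !inE.
by case: (x \in A); case: (x \in S).
Qed.

Theorem lemma8 (n : nat) (F : {set {set 'I_n}}) :
  s_extremal F ->
  exists (SS : {set {set 'I_n}}) (h : {set 'I_n} -> {set 'I_n}),
    [/\ sperner SS,
        (forall S, S \in SS -> h S \subset S),
        F = FSh SS h,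
        Sh F = HS SS &
        forall (SS' : {set {set 'I_n}}) (h' : {set 'I_n} -> {set 'I_n}),
          sperner SS' ->
          (forall S, S \in SS' -> h' S \subset S) ->
          F = FSh SS' h' -> Sh F = HS SS' ->
          SS' = SS /\ (forall S, S \in SS -> h' S = h S)].
Proof.
move=> ext.
pose SS := [set S : {set 'I_n} | (S \notin Sh F) &&
              [forall Y : {set 'I_n}, (Y \proper S) ==> (Y \in Sh F)]].
pose tr S := [set A :&: S | A in F].
pose h (S : {set 'I_n}) := odflt S [pick H : {set 'I_n} | (H \subset S) && (H \notin tr S)].
have SSP (S : {set 'I_n}) : S \in SS -> S \notin Sh F /\ forall Y : {set 'I_n}, Y \proper S -> Y \in Sh F.
  by rewrite inE => /andP [nS /forallP H]; split => // Y; apply/implyP.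
have hP (S : {set 'I_n}) : S \in SS -> h S \subset S /\ h S \notin tr S.
  move=> /SSP [nS _]; rewrite /h; case: pickP => [H /andP [] //| none].
  case/negP: nS; rewrite inE; apply/shattersP => Y YS.
  by have := none Y; rewrite YS /= => /negbFE /imsetP [A AF ->]; exists A.
have miss (S H1 H2 : {set 'I_n}) : S \in SS -> H1 \subset S -> H1 \notin tr S ->
    H2 \subset S -> H2 \notin tr S -> H1 = H2.
  move=> /SSP [nS pS] H1S H1t H2S H2t.
  have eSh : Sh (tr S) = powerset S :\ S.
    apply/setP => X; rewrite Sh_trace in_setD1 powersetE.
    case: (eqVneq X S) => [->|XS] /=; first by rewrite (negbTE nS) andbF.
    case XsS: (X \subset S) => //=; apply: pS; by rewrite properEneq XS.
  have te := trace_extremal S ext; rewrite /s_extremal eSh in te.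
  have trsub : tr S \subset powerset S.
    by apply/subsetP => _ /imsetP [A _ ->]; rewrite powersetE subsetIr.
  have cM : #|powerset S :\: tr S| == 1.
    rewrite cardsD (setIidPr trsub) -te.
    have := cardsD1 S (powerset S); rewrite inE subxx.
    move=> ->; by rewrite add1n subSnn.
  have [M eM] := cards1P cM.
  have : H1 \in powerset S :\: tr S by rewrite inE H1t powersetE.
  have : H2 \in powerset S :\: tr S by rewrite inE H2t powersetE.
  by rewrite eM !inE => /eqP -> /eqP ->.
have spSS : sperner SS.
  move=> A B /SSP [nA _] /SSP [_ pB] AB.
  case: (eqVneq A B) => // neq; case/negP: nA; apply: pB.
  by rewrite properEneq neq AB.
have eSh : Sh F = HS SS.
  apply/setP => X; rewrite [X \in HS SS]inE; apply/idP/idP.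
    move=> XS; apply/forall_inP => S /SSP [nS _]; apply: contra nS.
    exact: Sh_down XS.
  move=> /forall_inP H; apply/negPn/negP => nX.
  have P0 : (X \subset X) && (X \notin Sh F) by rewrite subxx nX.
  case: (@arg_minnP _ X (fun S : {set 'I_n} => (S \subset X) && (S \notin Sh F)) (fun S : {set 'I_n} => #|S|) P0) => S /andP [SX nS] minS.
  suff : S \in SS by move/H; rewrite SX.
  rewrite inE nS /=; apply/forallP => Y; apply/implyP => YS.
  apply/negPn/negP => nY.
  have := minS Y; rewrite (subset_trans (proper_sub YS) SX) nY => /(_ isT).
  by rewrite leqNgt (proper_card YS).
have FQ (SS0 : {set {set 'I_n}}) (h0 : {set 'I_n} -> {set 'I_n}) (A S : {set 'I_n}) : A \in FSh SS0 h0 -> S \in SS0 -> h0 S \subset S ->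
    A :&: S != h0 S.
  rewrite inE => AG SS0S hS; apply/negP => /eqP E; case/bigcupP: AG.
  by exists S => //; rewrite inQ // E.
have eF : F = FSh SS h.
  apply/eqP; rewrite eqEcard; apply/andP; split.
    apply/subsetP => A AF; rewrite inE; apply/bigcupP => [[S SSS]].
    have [hS ht] := hP S SSS; rewrite inQ // => /eqP E.
    by case/negP: ht; rewrite -E; apply: imset_f.
  apply: leq_trans (pajor _) _; rewrite -ext; apply: subset_leq_card.
  rewrite eSh; apply/subsetP => X; rewrite inE => /shattersP H.
  rewrite inE; apply/forall_inP => S SSS; apply/negP => SX.
  have [hS ht] := hP S SSS.
  have [A AG /setP E] := H (h S) (subset_trans hS SX).
  have := FQ _ _ _ _ AG SSS hS; case/negP; apply/eqP/setP => x.
  move: (E x) (subsetP SX x) (subsetP hS x); rewrite !inE.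
  by case: (x \in A); case: (x \in X); case: (x \in S); case: (x \in h S) => //=; bsolve.
exists SS, h; split => //; first by move=> S /hP [].
move=> SS' h' sp' hs' eF' eSh'.
have sub1 : SS' \subset SS.
  apply/subsetP => S SS'S; rewrite inE; apply/andP; split.
    by rewrite eSh' inE negb_forall_in; apply/exists_inP; exists S; rewrite ?subxx.
  apply/forallP => Y; apply/implyP => YS; rewrite eSh' inE.
  apply/forall_inP => S' S'in; apply/negP => S'Y.
  have eS := sp' S' S S'in SS'S (subset_trans S'Y (proper_sub YS)).
  by move: YS; rewrite properE -eS S'Y andbF.
have eSS : SS' = SS.
  apply/eqP; rewrite eqEsubset sub1 /=; apply/subsetP => S SSS.
  have [nS _] := SSP S SSS; move: nS; rewrite eSh' inE negb_forall_in.
  case/exists_inP => S' S'in; rewrite negbK => S'S.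
  by rewrite -(spSS S' S (subsetP sub1 _ S'in) SSS S'S).
split => // S SSS.
have [hS ht] := hP S SSS.
have SS'S : S \in SS' by rewrite eSS.
apply: (miss S) => //; first exact: hs'.
apply/imsetP => [[A AF E]]; rewrite eF' in AF.
by have := FQ _ _ _ _ AF SS'S (hs' S SS'S); rewrite E eqxx.
Qed.
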